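(* Let $D$ be a division ring. Then the only partial ideals of $D$ are $0$ and $D$.
   Context: For a ring $R$, a partial ideal is a subset $I\subseteq R$ such that for all $a,b\in R$ with $ab=ba$: if $a,b\in I$ then $a+b\in I$, and if $b\in I$ then $ab\in I$. *)

(* Defs.v *)
From mathcomp Require Import all_boot all_algebra.
Set Implicit Arguments. Unset Strict Implicit. Unset Printing Implicit Defensive.
Import GRing.Theory.
Local Open Scope ring_scope.

Definition is_division_ring (R : unitRingType) : Prop :=
  forall x : R, x != 0 -> x \is a GRing.unit.

Definition is_partial_ideal (R : pzRingType) (I : R -> Prop) : Prop :=
  forall a b : R, a * b = b * a ->
    (I a -> I b -> I (a + b)) /\ (I b -> I (a * b)).

(* Main.v *)
Require Import Defs.
From mathcomp Require Import all_boot all_algebra.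
From Stdlib Require Import Classical.
Local Open Scope ring_scope.
Import GRing.Theory.

Theorem proposition2p7 (D : unitRingType) (hD : is_division_ring D)
  (I : D -> Prop) (hI : is_partial_ideal I) (hne : exists x, I x) :
  (forall x, I x <-> x = 0) \/ (forall x, I x).
Proof.
have [x Ix] := hne.
have I0 : I 0.
  have hc : 0 * x = x * 0 by rewrite mul0r mulr0.
  by have := proj2 (hI 0 x hc) Ix; rewrite mul0r.
case: (Classical_Prop.classic (exists y, I y /\ y != 0)) => [[y [Iy ny]]|H].
  right => z.
  have Hu := hD y ny.
  have I1 : I 1.
    have hc : y^-1 * y = y * y^-1 by rewrite mulVr // divrr.
    by have := proj2 (hI y^-1 y hc) Iy; rewrite mulVr.
  have hc : z * 1 = 1 * z by rewrite mul1r mulr1.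
  by have := proj2 (hI z 1 hc) I1; rewrite mulr1.
left => z; split; last by move->.
move=> Iz; apply/eqP; apply/negPn/negP => nz; apply: H; by exists z.
Qed.
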